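(* Let $d\ge2$ be an integer and $N_1,\dots,N_d$ positive integers. Suppose $\mathbf{b}=(b_1,\dots,b_d)\in\mathbb{Z}^d$ is a nonzero vector with \[ \lambda=\lambda(\mathbf{b}):=\max_{1\le i\le d}\frac{|b_i|}{\gcd(b_1,\dots,b_d)N_i}\le1. \] Then there exists a map $f_{\mathbf{b}}:\mathbb{Z}^d\to\mathbb{Z}^{d-1}$ of the form $f_{\mathbf{b}}(\mathbf{x})=M\mathbf{x}+\mathbf{v}$ with $M\in\mathbb{Z}^{(d-1)\times d}$, $\mathbf{v}\in\mathbb{Z}^{d-1}$, such that: (1) for any $\mathbf{x}_1,\mathbf{x}_2\in\mathbb{Z}^d$, $f_{\mathbf{b}}(\mathbf{x}_1)=f_{\mathbf{b}}(\mathbf{x}_2)$ if and only if $\mathbf{x}_1-\mathbf{x}_2=k\mathbf{b}$ for some $k\in\mathbb{Q}$; (2) there exist positive integers $N_1^*,\dots,N_{d-1}^*\ge\min_{1\le i\le d}N_i$ with $\frac12\le\frac{N_1^*\cdots N_{d-1}^*}{\lambda N_1\cdots N_d}\le2^{d^2}$ and $f_{\mathbf{b}}([N_1]\times\cdots\times[N_d])\subseteq[N_1^*]\times\cdots\times[N_{d-1}^*]$.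
   Context: $[N]=\{1,\dots,N\}$. *)

(* Defs.v *)
From HB Require Import structures.
From mathcomp Require Import all_boot all_order all_algebra.
Set Implicit Arguments. Unset Strict Implicit. Unset Printing Implicit Defensive.
Import Order.TTheory GRing.Theory Num.Theory.
Local Open Scope ring_scope.

Definition gcd_vec (d : nat) (b : 'I_d -> int) : int :=
  \big[gcdz/0%Z]_(i < d) b i.

Definition lam (d : nat) (N : 'I_d -> nat) (b : 'I_d -> int) : rat :=
  \big[Num.max/0]_(i < d) ((`|b i|%:~R : rat) / ((gcd_vec b * (N i)%:Z)%:~R)).

Definition minN (d : nat) (N : 'I_d -> nat) : nat :=
  (\big[minn/(\max_(i < d) N i)%N]_(i < d) N i)%N.

(* Main.v *)
Require Import Defs.
From HB Require Import structures.
From mathcomp Require Import all_boot all_order all_algebra.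
From mathcomp Require Import zify ring lra.
From Stdlib Require Import Classical.
Import Order.TTheory GRing.Theory Num.Theory.
Local Open Scope ring_scope.

Module Helpers.
Set Implicit Arguments. Unset Strict Implicit. Unset Printing Implicit Defensive.
Definition phi n' (p : 'I_n'.+1) (y x : 'rV[int]_n'.+1) : 'rV[int]_n' :=
  \row_k (y ord0 p * x ord0 (lift p k) - x ord0 p * y ord0 (lift p k)).

Definition proj n' (p : 'I_n'.+1) (X : 'M[int]_n'.+1) : 'M[int]_n' :=
  \matrix_j phi p (row ord0 X) (row (lift ord0 j) X).

Lemma sum_delta n (F : 'I_n -> int) k : \sum_i F i * (i == k)%:R = F k.
Proof.
rewrite (bigD1 k) //= eqxx mulr1 big1 ?addr0 // => i ik.
by rewrite (negbTE ik) mulr0.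
Qed.

Lemma sum_deltaL n (F : 'I_n -> int) k : \sum_i (i == k)%:R * F i = F k.
Proof. by under eq_bigr => i _ do rewrite mulrC; rewrite sum_delta. Qed.

Lemma sum_delta2 n (F : 'I_n -> int) a b k p :
  \sum_i F i * (a * (i == k)%:R - (i == p)%:R * b) = F k * a - F p * b.
Proof.
under eq_bigr => i _ do rewrite mulrBr mulrA [F i * (_ * b)]mulrCA mulrC.
by rewrite sumrB !sum_deltaL.
Qed.

Lemma lift_neq n (p : 'I_n.+1) j : (lift p j == p) = false.
Proof. by rewrite eq_sym (negbTE (neq_lift _ _)). Qed.

Lemma DL n' (X : 'M[int]_n'.+1) (p : 'I_n'.+1) :
  (`|\det X| * `|X ord0 p| ^ n')%N = (`|X ord0 p| * `|\det (proj p X)|)%N.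
Proof.
set T : 'M[int]_n'.+1 := \matrix_(i, k) (if k == p then (i == p)%:R
   else X ord0 p * (i == k)%:R - (i == p)%:R * X ord0 k).
have dT : \det T = X ord0 p ^+ n'.
  rewrite (expand_det_col T p) (bigD1 p) //= big1 => [|i ip]; last first.
    by rewrite mxE eqxx (negbTE ip) mul0r.
  rewrite mxE !eqxx mul1r addr0 /cofactor.
  have -> : row' p (col' p T) = (X ord0 p)%:M.
    apply/matrixP => i j; rewrite !mxE !lift_neq (inj_eq lift_inj).
    by rewrite mul0r subr0; case: (i == j); rewrite ?mulr1 ?mulr0.
  by rewrite det_scalar -signr_odd addnn odd_double expr0 mul1r.
have e1 : \det (X *m T) = \det X * X ord0 p ^+ n' by rewrite det_mulmx dT.
have e2 : \det (X *m T) = X ord0 p * ((-1) ^+ (0 + p) * \det (proj p X)).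
  rewrite (expand_det_row _ ord0) (bigD1 p) //= big1 => [|k kp]; last first.
    rewrite !mxE.
    under eq_bigr => i _ do rewrite mxE (negbTE kp).
    by rewrite sum_delta2 [X ord0 k * _]mulrC subrr mul0r.
  rewrite addr0 /cofactor; congr (_ * (_ * _)).
    rewrite mxE; under eq_bigr => i _ do rewrite mxE eqxx.
    by rewrite sum_delta.
  congr (\det _); apply/matrixP => j k; rewrite !mxE.
  under eq_bigr => i _ do rewrite mxE lift_neq.
  by rewrite sum_delta2 mulrC.
have := congr1 absz (etrans (esym e1) e2).
by rewrite !abszM abszX absz_sign mul1n.
Qed.

Definition nrm n (N : 'I_n -> nat) (x : 'rV[int]_n) : nat :=
  (\sum_i `|x ord0 i| * N i)%N.

Lemma nrm_split n' (N : 'I_n'.+1 -> nat) p x :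
  nrm N x = (`|x ord0 p| * N p + nrm (fun k => N (lift p k)) (\row_k x ord0 (lift p k)))%N.
Proof.
rewrite /nrm (bigD1_ord p) //=; congr (_ + _)%N.
by apply: eq_bigr => k _; rewrite mxE.
Qed.

Lemma LB n' (N : 'I_n'.+1 -> nat) p (y x : 'rV[int]_n'.+1) :
  (nrm N y <= nrm N x)%N -> (2 * `|x ord0 p| <= `|y ord0 p|)%N ->
  (`|y ord0 p| * nrm N x <= 2 * nrm (fun k => N (lift p k)) (phi p y x))%N.
Proof.
move=> hyx hp.
have key : (`|y ord0 p| * nrm (fun k => N (lift p k)) (\row_k x ord0 (lift p k)) <=
   nrm (fun k => N (lift p k)) (phi p y x) +
   `|x ord0 p| * nrm (fun k => N (lift p k)) (\row_k y ord0 (lift p k)))%N.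
  rewrite /nrm !big_distrr -big_split /=; apply: leq_sum => k _; rewrite !mxE.
  rewrite !mulnA -mulnDl leq_mul2r; apply/orP; right.
  rewrite -!abszM.
  have -> : y ord0 p * x ord0 (lift p k) = (y ord0 p * x ord0 (lift p k) - x ord0 p * y ord0 (lift p k)) + x ord0 p * y ord0 (lift p k) by rewrite subrK.
  lia.
move: hyx; rewrite (nrm_split N p x) (nrm_split N p y).
set Sx := nrm _ (\row_k x ord0 (lift p k)); set Sy := nrm _ (\row_k y ord0 (lift p k)).
set Z := nrm _ (phi p y x) in key *.
set a := `|x ord0 p|%N in hp key *; set c := `|y ord0 p|%N in hp key *.
move=> hyx.
nia.
Qed.

Lemma round_ex (a b : int) : b != 0 -> exists k, (2 * `|(a - k * b)%R| <= `|b|)%N.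
Proof.
move=> b0.
have := divz_eq a b; have := modz_ge0 a b0; have := ltz_mod a b0.
set q := (a %/ b)%Z; set r := (a %% b)%Z => h1 h2 h3.
case: (leqP (2 * `|r|) `|b|) => h.
  by exists q; rewrite {1}h3 addrC addKr.
exists (q + sgz b); rewrite {1}h3 mulrDl -abszEsg.
lia.
Qed.

Lemma ex_min (P : nat -> Prop) : (exists n, P n) -> exists m, P m /\ forall k, P k -> (m <= k)%N.
Proof.
move=> [n Pn]; elim: n {-2}n (leqnn n) Pn => [|n IH] m hm Pm.
  by exists m; split=> // k _; move: hm; rewrite leqn0 => /eqP ->.
case: (classic (exists k, (k < m)%N /\ P k)) => [[k [hk Pk]]|h].
  by apply: (IH k) => //; lia.
exists m; split=> // k Pk; rewrite leqNgt; apply/negP => hk; apply: h; by exists k.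
Qed.

Lemma mulmx_eq0 n (B : 'M[int]_n) (w : 'rV[int]_n) : \det B != 0 -> w *m B = 0 -> w = 0.
Proof.
move=> dB h; have := congr1 (mulmx^~ (\adj B)) h.
rewrite -mulmxA mul_mx_adj mul0mx mul_mx_scalar => /matrixP hw.
apply/matrixP => i j; move: (hw i j); rewrite !mxE => /eqP.
by rewrite mulf_eq0 (negbTE dB) /= => /eqP.
Qed.

Lemma row_nz n (A : 'M[int]_n) j : \det A != 0 -> row j A != 0.
Proof.
move=> dA; apply/negP => /eqP h; move/negP: dA; apply; apply/eqP.
rewrite (expand_det_row _ j) big1 // => k _.
by have := congr1 (fun v : 'rV_n => v 0 k) h; rewrite !mxE => ->; rewrite mul0r.
Qed.

Definition inlat n (B : 'M[int]_n) (x : 'rV[int]_n) := exists w : 'rV[int]_n, x = w *m B.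

Lemma nrm_scale n (N : 'I_n -> nat) k x : nrm N (k *: x) = (`|k| * nrm N x)%N.
Proof. rewrite /nrm big_distrr; apply: eq_bigr => i _; by rewrite mxE abszM /= mulnA. Qed.

Lemma sum_le_const n (F : 'I_n -> nat) c : (forall i, F i <= c)%N -> (\sum_i F i <= n * c)%N.
Proof.
move=> h; rewrite -[n in (_ <= n * _)%N]card_ord -sum_nat_const; exact: leq_sum.
Qed.

Lemma unit_abs (z : int) : z \is a GRing.unit -> `|z|%N = 1%N.
Proof. move=> h. lia. Qed.

Lemma phi_self n' p (y : 'rV[int]_n'.+1) : phi p y y = 0.
Proof. by apply/rowP => k; rewrite !mxE mulrC subrr. Qed.

Lemma arith (Y0 Pi Pi2 A e T1 T2 T3 D2 Dt NP Nr n1 : nat) :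
 (0 < e)%N -> (n1 <= T3)%N -> (e * Pi <= T2 * Pi2)%N -> (Pi2 <= T1 * D2 * Nr)%N ->
 (Dt * e = A * D2)%N -> (Y0 <= n1 * (A * NP))%N ->
 (Y0 * Pi <= T1 * T2 * T3 * Dt * (NP * Nr))%N.
Proof.
move=> e0 h3 h1 h2 hd hy.
rewrite -(leq_pmul2l e0).
have -> : (e * (Y0 * Pi) = Y0 * (e * Pi))%N by ring.
apply: (leq_trans (leq_mul hy h1)).
apply: (leq_trans (leq_mul (leqnn _) (leq_mul (leqnn T2) h2))).
have -> : (n1 * (A * NP) * (T2 * (T1 * D2 * Nr)) = n1 * (T1 * T2 * NP * Nr) * (A * D2))%N by ring.
rewrite -hd.
have -> : (e * (T1 * T2 * T3 * Dt * (NP * Nr)) = T3 * (T1 * T2 * NP * Nr) * (Dt * e))%N by ring.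
by rewrite leq_mul2r leq_mul2r h3 !orbT.
Qed.

Lemma prod_const n c : (\prod_(j < n) c = c ^ n)%N.
Proof. by rewrite prod_nat_const card_ord. Qed.

Lemma ML n : forall (B : 'M[int]_n) (N : 'I_n -> nat), (forall i, 0 < N i)%N -> \det B != 0 ->
  exists Y : 'M[int]_n, (forall j, inlat B (row j Y)) /\ \det Y != 0 /\
   (\prod_j nrm N (row j Y) <= 2 ^ (n * n) * `|\det B| * \prod_i N i)%N.
Proof.
elim: n => [|n' IH] B N Npos dB.
  exists B; split; first by case.
  split=> //; rewrite !big_ord0 muln1 mul1n; by rewrite absz_gt0.
have hex : exists k, exists w : 'rV[int]_n'.+1, w != 0 /\ nrm N (w *m B) = k.
  exists (nrm N (const_mx 1 *m B)), (const_mx 1); split=> //.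
  by apply/eqP => /matrixP/(_ 0 0)/eqP; rewrite !mxE oner_eq0.
have [m0 [[w0 [w0nz hw0]] hmin0]] := ex_min hex.
have [L uL [R uR [d _ hsnf]]] := int_Smith_normal_form w0.
set kap := L 0 0 * d`_0.
have ew0 : w0 = kap *: row ord0 R.
  rewrite {1}hsnf; apply/matrixP => i j; rewrite !ord1 !mxE.
  rewrite (bigD1 ord0) //= big1 => [|k k0]; last first.
    rewrite !mxE big_ord1 !mxE.
    have -> : (nat_of_ord (0 : 'I_1) == nat_of_ord k) = false.
      by apply/negbTE; move: k0; apply: contra => /eqP h; apply/eqP/val_inj.
    by rewrite mulr0n mulr0 mul0r.
  by rewrite addr0 !mxE big_ord1 !mxE mulr1n.
set X := R *m B.
set r0 := row ord0 R.
have rX : row ord0 X = r0 *m B by rewrite row_mul.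
have eX : X = R *m B by [].
clearbody X.
have kap0 : kap != 0 by apply/eqP => k0; move: w0nz; rewrite ew0 k0 scale0r eqxx.
have r0nz : r0 != 0 by apply/eqP => k0; move: w0nz; rewrite ew0 -/r0 k0 scaler0 eqxx.
have ynz : row ord0 X != 0.
  by rewrite rX; apply/eqP => /(mulmx_eq0 dB) /eqP; rewrite (negbTE r0nz).
have hmin : forall w, w *m B != 0 -> (nrm N (row ord0 X) <= nrm N (w *m B))%N.
  move=> w hw.
  have wnz : w != 0 by apply: contraNneq hw => ->; rewrite mul0mx.
  apply: leq_trans (hmin0 _ (ex_intro _ w (conj wnz erefl))).
  rewrite -hw0 ew0 -scalemxAl nrm_scale -rX leq_pmull // absz_gt0 //.
case: (arg_maxnP (fun i => `|X ord0 i| * N i)%N (isT : predT ord0)) => p _ hp.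
have yp0 : X ord0 p != 0.
  have [i hi] : exists i, X ord0 i != 0.
    case: (pickP (fun i => X ord0 i != 0)) => [i hi|h]; first by exists i.
    by case/negP: ynz; apply/eqP/rowP => i; rewrite !mxE; move: (h i) => /= /negbFE/eqP.
  have h1 : (0 < `|X ord0 i| * N i)%N by rewrite muln_gt0 absz_gt0 hi Npos.
  have := leq_trans h1 (hp i isT); by rewrite muln_gt0 absz_gt0 => /andP[].
have hy : (nrm N (row ord0 X) <= n'.+1 * (`|X ord0 p| * N p))%N.
  by apply: sum_le_const => i; rewrite mxE; apply: hp.
have dR : (`|\det R| = 1)%N by apply: unit_abs; rewrite -unitmxE.
have dX : (`|\det X| = `|\det B|)%N by rewrite eX det_mulmx abszM dR mul1n.
have hDL := DL X p.
set B2 := proj p X in hDL.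
have dB2 : \det B2 != 0.
  apply/eqP => h; move: hDL; rewrite h dX absz0 muln0 => /eqP.
  by rewrite muln_eq0 expn_eq0 !absz_eq0 (negbTE yp0) (negbTE dB).
have [Y2 [inl2 [dY2 hY2]]] := IH B2 (fun k => N (lift p k)) (fun k => Npos _) dB2.
have [w2 hw2] := fin_all_exists inl2.
set Xd := \matrix_l row (lift ord0 l) X.
have eXd : Xd = (\matrix_l row (lift ord0 l) R) *m B.
  by apply/row_matrixP => l; rewrite row_mul !rowK eX row_mul.
set x1 := fun j => w2 j *m Xd.
have phix1 : forall j, phi p (row ord0 X) (x1 j) = row j Y2.
  move=> j; rewrite hw2; apply/rowP => k; rewrite !mxE mulr_sumr mulr_suml -sumrB.
  apply: eq_bigr => l _; rewrite !mxE; ring.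
have inx1 : forall j, exists u, x1 j = u *m B.
  by move=> j; exists (w2 j *m \matrix_l row (lift ord0 l) R); rewrite /x1 eXd mulmxA.
have [kap2 hk2] := fin_all_exists (fun j => round_ex ((x1 j) ord0 p) yp0).
set x := fun j => x1 j - kap2 j *: row ord0 X.
have inx : forall j, exists u, x j = u *m B.
  move=> j; have [u hu] := inx1 j; exists (u - kap2 j *: r0).
  by rewrite /x hu rX mulmxBl scalemxAl.
have phix : forall j, phi p (row ord0 X) (x j) = row j Y2.
  by move=> j; rewrite -phix1; apply/rowP => k; rewrite !mxE; ring.
have hround : forall j, (2 * `|x j ord0 p| <= `|X ord0 p|)%N.
  by move=> j; have := hk2 j; rewrite /x !mxE.
set Y : 'M[int]_n'.+1 := \matrix_i (if unlift ord0 i is Some j then x j else row ord0 X).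
have rY0 : row ord0 Y = row ord0 X by rewrite rowK unlift_none.
have rYl : forall j, row (lift ord0 j) Y = x j by move=> j; rewrite rowK liftK.
have pY : proj p Y = Y2.
  apply/row_matrixP => j; rewrite rowK rY0 rYl phix //.
have Y0p : Y ord0 p = X ord0 p.
  by have := congr1 (fun v : 'rV_n'.+1 => v 0 p) rY0; rewrite !mxE.
have hDLY := DL Y p; rewrite pY Y0p in hDLY.
exists Y; split.
  move=> i; rewrite rowK; case: (unlift ord0 i) => [j|]; first exact: inx.
  by exists r0.
split.
  apply/eqP => h; move: hDLY; rewrite h absz0 mul0n => /esym/eqP.
  by rewrite muln_eq0 !absz_eq0 (negbTE yp0) (negbTE dY2).
rewrite big_ord_recl rY0 (eq_bigr (fun j => nrm N (x j))); last by move=> j _; rewrite rYl.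
have hx : forall j, (`|X ord0 p| * nrm N (x j) <= 2 * nrm (fun k => N (lift p k)) (row j Y2))%N.
  move=> j; rewrite -phix.
  have [u hu] := inx j.
  have xnz : x j != 0.
    apply: contraNneq (row_nz j dY2) => h; rewrite -phix h.
    by apply/eqP/rowP => k; rewrite !mxE mulr0 mul0r subrr.
  have := @LB n' N p (row ord0 X) (x j); rewrite ![row ord0 X ord0 p]mxE; apply.
    by rewrite hu; apply: hmin; rewrite -hu.
  exact: hround.
have prodx : (\prod_(j < n') (`|X ord0 p| * nrm N (x j)) <=
    \prod_(j < n') (2 * nrm (fun k => N (lift p k)) (row j Y2)))%N.
  by apply: leq_prod => j _; exact: hx j.
rewrite !big_split /= !prod_const in prodx.
rewrite (bigD1_ord p (P := fun i => true)) //=.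
rewrite dX in hDL.
have pow : (2 ^ (n'.+1 * n'.+1) = 2 ^ (n' * n') * 2 ^ n' * 2 ^ n'.+1)%N.
  by rewrite -!expnD; congr (_ ^ _)%N; lia.
have pow2 : (n'.+1 <= 2 ^ n'.+1)%N by apply: ltnW; apply: ltn_expl.
rewrite pow.
have e0 : (0 < `|X ord0 p| ^ n')%N by rewrite expn_gt0 absz_gt0 yp0.
exact: (arith e0 pow2 prodx hY2 hDL hy).
Qed.

Lemma snf_row m (w : 'rV[int]_m.+1) : exists k (R : 'M[int]_m.+1), R \in unitmx /\ w = k *: row ord0 R.
Proof.
have [L uL [R uR [d _ hsnf]]] := int_Smith_normal_form w.
exists (L 0 0 * d`_0), R; split=> //.
rewrite {1}hsnf; apply/matrixP => i j; rewrite !ord1 !mxE.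
rewrite (bigD1 ord0) //= big1 => [|k k0]; last first.
  rewrite !mxE big_ord1 !mxE.
  have -> : (nat_of_ord (0 : 'I_1) == nat_of_ord k) = false.
    by apply/negbTE; move: k0; apply: contra => /eqP h; apply/eqP/val_inj.
  by rewrite mulr0n mulr0 mul0r.
by rewrite addr0 !mxE big_ord1 !mxE mulr1n.
Qed.

Lemma gcd_vec_nat d (b : 'I_d -> int) : gcd_vec b = (\big[gcdn/0%N]_(i < d) `|b i|%N)%:Z.
Proof. by rewrite /gcd_vec; apply: (big_rec2 (fun x y => x = y%:Z)) => // i x y _ ->. Qed.

Lemma gcd_snf d (b : 'I_d.+1 -> int) k (R : 'M[int]_d.+1) : R \in unitmx ->
  (forall i, b i = k * R ord0 i) -> gcd_vec b = `|k|%:Z.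
Proof.
move=> uR hb; rewrite gcd_vec_nat; congr Posz; apply/eqP; rewrite eqn_dvd; apply/andP; split.
  set G := \big[gcdn/0%N]_(i < d.+1) `|b i|%N.
  have hG : forall i, (G %| `|b i|)%N by move=> i; apply: (elimT (dvdn_biggcdP _ _ _) (dvdnn G)).
  have ek : k = \sum_i b i * invmx R i ord0.
    have := congr1 (fun A : 'M_d.+1 => A ord0 ord0) (mulmxV uR); rewrite !mxE /= => e.
    under eq_bigr => i _ do rewrite hb -mulrA.
    by rewrite -mulr_sumr e mulr1.
  have : (G%:Z %| k)%Z.
    rewrite ek; apply: (big_ind (fun x => (G%:Z %| x)%Z)) => //; first by move=> x y; apply: rpredD.
    by move=> i _; apply: dvdz_mulr; apply: hG.
  by [].
by apply/dvdn_biggcdP => i _; rewrite hb abszM dvdn_mulr.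
Qed.

Lemma bigminn_le (I : eqType) (r : seq I) (F : I -> nat) x0 i :
  i \in r -> (\big[minn/x0]_(j <- r) F j <= F i)%N.
Proof.
elim: r => // a r IH; rewrite inE big_cons => /orP [/eqP -> | h]; first exact: geq_minl.
exact: leq_trans (geq_minr _ _) (IH h).
Qed.

Lemma minN_le d (N : 'I_d -> nat) i : (minN N <= N i)%N.
Proof. by rewrite /minN; apply: bigminn_le; exact: mem_index_enum. Qed.

Lemma det_minor d (R : 'M[int]_d.+1) r : R \in unitmx ->
  `|\det (\matrix_(j, k) (invmx R) (lift r k) (lift ord0 j) : 'M_d)|%N = `|R ord0 r|%N.
Proof.
move=> uR; set Q := invmx R.
have uQ : Q \in unitmx by rewrite unitmx_inv.
have hadj : \adj Q = \det Q *: R.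
  have := congr1 (mulmx R) (mul_mx_adj Q).
  by rewrite mulmxA mulmxV // mul1mx mul_mx_scalar.
have e := congr1 (fun A : 'M_d.+1 => A ord0 r) hadj; rewrite /= !mxE /cofactor in e.
have -> : (\matrix_(j, k) Q (lift r k) (lift ord0 j) : 'M_d) = (row' r (col' ord0 Q))^T.
  by apply/matrixP => j k; rewrite !mxE.
rewrite det_tr; have := congr1 absz e; rewrite abszMsign => ->.
by rewrite abszM unit_abs ?mul1n // -unitmxE.
Qed.

Lemma lam_val d (N : 'I_d -> nat) (b : 'I_d -> int) r (g : nat) :
  (forall i, 0 < N i)%N -> gcd_vec b = g%:Z -> (0 < g)%N ->
  (forall j, `|b j| * N r <= `|b r| * N j)%N ->
  lam N b = (`|b r|%N%:R / (g * N r)%N%:R : rat).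
Proof.
move=> Npos hg g0 hr; rewrite /lam hg.
have hF : forall i, ((`|b i|%:~R : rat) / ((g%:Z * (N i)%:Z)%:~R)) =
   `|b i|%N%:R / (g * N i)%N%:R.
  by move=> i; rewrite -abszE -PoszM.
under eq_bigr => i _ do rewrite hF.
apply/le_anti/andP; split; last exact: (le_bigmax _ (fun i => `|b i|%N%:R / (g * N i)%N%:R) r).
apply: bigmax_le => [|i _]; first by rewrite divr_ge0 ?ler0n.
rewrite ler_pdivrMr ?ltr0n ?muln_gt0 ?g0 ?Npos // mulrAC ler_pdivlMr ?ltr0n ?muln_gt0 ?g0 ?Npos //.
rewrite -!natrM ler_nat mulnCA [(`|b r| * _)%N]mulnCA leq_mul2l hr orbT //.
Qed.


Lemma abs_sum_le n (F : 'I_n -> int) : (`|(\sum_i F i)%R| <= \sum_i `|F i|)%N.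
Proof.
apply: (@big_rec2 int nat (fun y x => (`|y| <= x)%N)) => // i y x _ h; lia.
Qed.

Lemma rat_id (a c n p : rat) : a != 0 -> n != 0 -> a * c / (a * n) * (n * p) = c * p.
Proof. by move=> ha hn; field; rewrite ha hn. Qed.

Lemma half_le (x y : nat) : (0 < y)%N -> (y <= 2 * x)%N -> (1 / 2 : rat) <= x%:R / y%:R.
Proof.
move=> y0 h; rewrite ler_pdivlMr ?ltr0n //.
have : (y%:R <= 2 * x%:R :> rat) by rewrite -natrM ler_nat.
lra.
Qed.

Lemma up_le (x y m : nat) : (0 < y)%N -> (x <= 2 ^ m * y)%N -> x%:R / y%:R <= (2 ^+ m : rat).
Proof.
by move=> y0 h; rewrite ler_pdivrMr ?ltr0n // -natrX -natrM ler_nat.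
Qed.

Lemma term_bd (m x : int) (n : nat) : 1 <= x <= n%:Z ->
  0 <= m * x - (if 0 <= m then m else m * n%:Z) <= `|m| * (n%:Z - 1).
Proof.
case/andP => h1 h2; case: ifP => hm.
  rewrite ger0_norm //.
  have -> : m * x - m = m * (x - 1) by ring.
  rewrite mulr_ge0 ?subr_ge0 //=; apply: ler_wpM2l => //; lra.
have hm' : m < 0 by rewrite ltNge hm.
rewrite ltr0_norm //.
have -> : m * x - m * n%:Z = (- m) * (n%:Z - x) by ring.
have hm2 : 0 <= - m by rewrite oppr_ge0 ltW.
rewrite mulr_ge0 ?subr_ge0 //=; apply: ler_wpM2l => //; lra.
Qed.

Lemma intr_sum n (F : 'I_n -> int) : ((\sum_i F i)%:~R : rat) = \sum_i (F i)%:~R.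
Proof. by rewrite rmorph_sum. Qed.

End Helpers.
Import Helpers.
Unset Implicit Arguments.

Theorem corollary4p6 (d : nat) (N : 'I_d -> nat) (b : 'I_d -> int) :
  (2 <= d)%N ->
  (forall i, (0 < N i)%N) ->
  (exists i, b i != 0) ->
  lam N b <= 1 ->
  exists (M : 'M[int]_(d.-1, d)) (v : 'cV[int]_(d.-1)),
    (forall x1 x2 : 'cV[int]_d,
        M *m x1 + v = M *m x2 + v <->
        exists k : rat, forall i, ((x1 i 0 - x2 i 0)%:~R : rat) = k * (b i)%:~R)
    /\
    (exists Nstar : 'I_(d.-1) -> nat,
        (forall j, (0 < Nstar j)%N /\ (minN N <= Nstar j)%N) /\
        (1 / 2 : rat) <= ((\prod_(j < d.-1) Nstar j)%N%:R) / (lam N b * ((\prod_(i < d) N i)%N)%:R) /\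
        ((\prod_(j < d.-1) Nstar j)%N%:R) / (lam N b * ((\prod_(i < d) N i)%N)%:R) <= 2 ^+ (d ^ 2) /\
        (forall x : 'cV[int]_d,
           (forall i, 1 <= x i 0 <= (N i)%:Z) ->
           forall j, 1 <= (M *m x + v) j 0 <= (Nstar j)%:Z)).
Proof.
case: d N b => [|[|d']] N b // _ Npos [i0 bi0] _.
pose F := fun i => (`|b i|%N%:R / (N i)%:R : rat).
have [r _ hr] := @arg_maxP _ _ _ ord0 predT F isT.
have hr' : forall j, (`|b j| * N r <= `|b r| * N j)%N.
  move=> j; have h : F j <= F r := hr j isT; move: h; rewrite /F.
  rewrite ler_pdivrMr ?ltr0n ?Npos // mulrAC ler_pdivlMr ?ltr0n ?Npos //.
  by rewrite -!natrM ler_nat.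
have br0 : b r != 0.
  apply/eqP => h; have := hr' i0; rewrite h absz0 mul0n leqn0 muln_eq0.
  rewrite absz_eq0 (negbTE (lt0n_neq0 (Npos r))) orbF => /eqP h0.
  by rewrite h0 eqxx in bi0.
have [k [R [uR ebR]]] := snf_row (\row_i b i).
have hb : forall i, b i = k * R ord0 i.
  by move=> i; have := congr1 (fun v : 'rV_d'.+2 => v ord0 i) ebR; rewrite !mxE.
have k0 : k != 0 by apply/eqP => h; move: br0; rewrite hb h mul0r eqxx.
have R0r : R ord0 r != 0 by apply/eqP => h; move: br0; rewrite hb h mulr0 eqxx.
have hg := gcd_snf uR hb.
have g0 : (0 < `|k|)%N by rewrite absz_gt0.
have hlamv := lam_val Npos hg g0 hr'.
have dBm := det_minor r uR.
set Bm := \matrix_(j, kk) _ in dBm.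
have dBm0 : \det Bm != 0 by rewrite -absz_eq0 dBm absz_eq0.
have [Y [inlY [dY hY]]] := @ML _ Bm (fun kk => N (lift r kk)) (fun kk => Npos _) dBm0.
have [w hw] := fin_all_exists inlY.
have RQ := mulmxV uR.
set Q := invmx R.
set M : 'M[int]_(d'.+1, d'.+2) := \matrix_(j, i) \sum_l w j ord0 l * Q i (lift ord0 l).
have MY : forall j kk, M j (lift r kk) = Y j kk.
  move=> j kk; have := congr1 (fun v : 'rV_d'.+1 => v ord0 kk) (hw j); rewrite !mxE => ->.
  by apply: eq_bigr => l _; rewrite !mxE.
have Mb : forall j, \sum_i b i * M j i = 0.
  move=> j; under eq_bigr => i _ do rewrite hb mxE mulr_sumr.
  rewrite exchange_big /= big1 // => l _.
  have e := congr1 (fun A : 'M_d'.+2 => A ord0 (lift ord0 l)) RQ; rewrite /= !mxE eq_sym lift_neq in e.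
  transitivity (k * w j ord0 l * \sum_i R ord0 i * Q i (lift ord0 l)); last by rewrite e mulr0.
  rewrite mulr_sumr; apply: eq_bigr => i _; ring.
clearbody M.
have hnM : forall j, (nrm N (row j M) <= 2 * nrm (fun kk => N (lift r kk)) (row j Y))%N.
  move=> j.
  have eY : \row_kk (row j M) ord0 (lift r kk) = row j Y by apply/rowP => kk; rewrite !mxE MY.
  rewrite (nrm_split N r) eY mxE.
  suff h : (`|M j r| * N r <= nrm (fun kk => N (lift r kk)) (row j Y))%N by lia.
  have e := Mb j; rewrite (bigD1_ord r) //= in e.
  have h1 : (`|b r| * `|M j r| <= \sum_kk `|b (lift r kk)| * `|Y j kk|)%N.
    rewrite -abszM.
    have -> : b r * M j r = - \sum_(kk < d'.+1) b (lift r kk) * M j (lift r kk).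
      by apply/eqP; rewrite -addr_eq0 e.
    rewrite abszN; apply: leq_trans (abs_sum_le _) _; apply: leq_sum => kk _.
    by rewrite abszM MY.
  rewrite -(@leq_pmul2l `|b r|) ?absz_gt0 //.
  rewrite mulnA; apply: leq_trans (leq_mul h1 (leqnn (N r))) _.
  rewrite /nrm big_distrl big_distrr /=; apply: leq_sum => kk _; rewrite mxE.
  have := hr' (lift r kk); nia.
have Ynz : forall j, exists kk, Y j kk != 0.
  move=> j; case: (pickP (fun kk => Y j kk != 0)) => [kk hk|h]; first by exists kk.
  by case/negP: (row_nz j dY); apply/eqP/rowP => kk; rewrite !mxE; move: (h kk) => /= /negbFE/eqP.
have hNst0 : forall j, exists kk, Y j kk != 0 /\ (N (lift r kk) <= nrm N (row j M))%N.
  move=> j; have [kk hk] := Ynz j; exists kk; split=> //.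
  rewrite /nrm (bigD1 (lift r kk)) //= mxE MY.
  by apply: leq_trans (leq_addr _ _); rewrite leq_pmull // absz_gt0.
set P := \prod_(j < d'.+1) nrm N (row j M).
have P0 : (0 < P)%N.
  apply: prodn_gt0 => j; have [kk [_ h]] := hNst0 j; exact: leq_trans (Npos _) h.
set V := (`|R ord0 r| * \prod_(kk < d'.+1) N (lift r kk))%N.
have V0 : (0 < V)%N by rewrite muln_gt0 absz_gt0 R0r; apply: prodn_gt0.
have hP : (P <= 2 ^ d'.+1 * (2 ^ (d'.+1 * d'.+1) * V))%N.
  apply: (@leq_trans (\prod_(j < d'.+1) (2 * nrm (fun kk => N (lift r kk)) (row j Y)))%N).
    by apply: leq_prod => j _; apply: hnM.
  rewrite big_split /= prod_const leq_mul2l mulnA /V -dBm; apply/orP; right; exact: hY.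
set K := if (2 * P < V)%N then (V %/ P).+1 else 1%N.
pose Nst := fun j : 'I_d'.+1 => if j == ord0 then (nrm N (row j M) * K)%N else nrm N (row j M).
have hprod : (\prod_j Nst j = P * K)%N.
  rewrite /Nst big_ord_recl eqxx.
  rewrite /=.
  by rewrite /P big_ord_recl mulnAC.
have hK1 : (1 <= K)%N by rewrite /K; case: ifP.
have hlow : (V <= 2 * (P * K))%N.
  rewrite /K; case: ifP => h.
    apply: leq_trans (ltnW (ltn_ceil V P0)) _; rewrite mulnC; exact: leq_pmull.
  by rewrite muln1; move: h; rewrite ltnNge => /negbFE.
have hup : (P * K <= 2 ^ (d'.+2 ^ 2) * V)%N.
  rewrite /K; case: ifP => h.
    have h2 : (P * (V %/ P) <= V)%N by rewrite mulnC leq_divM.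
    apply: (@leq_trans (V + V)%N); first by rewrite mulnS; lia.
    rewrite addnn -mul2n leq_mul2r; apply/orP; right.
    by rewrite -{1}(expn1 2) leq_pexp2l.
  rewrite muln1; apply: leq_trans hP _; rewrite mulnA -expnD leq_mul2r; apply/orP; right.
  by rewrite leq_pexp2l //; lia.
have hLV : lam N b * (\prod_i N i)%N%:R = V%:R.
  rewrite hlamv (bigD1_ord r) //= hb /V !abszM !natrM.
  have hk : (`|k|%:R : rat) != 0 by rewrite pnatr_eq0 -lt0n.
  have hN : ((N r)%:R : rat) != 0 by rewrite pnatr_eq0 -lt0n.
  exact: rat_id.
pose lo := fun (m : int) (Ni : nat) => if 0 <= m then m else m * Ni%:Z.
pose v : 'cV[int]_d'.+1 := \col_j (1 - \sum_i lo (M j i) (N i)).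
exists M, v; split; last first.
  exists Nst; split.
    move=> j; have [kk [_ h]] := hNst0 j.
    have h1 : (nrm N (row j M) <= Nst j)%N.
      by rewrite /Nst; case: ifP => // _; rewrite leq_pmulr.
    split; first exact: leq_trans (leq_trans (Npos _) h) h1.
    apply: leq_trans h1; apply: leq_trans h; exact: minN_le.
  change (\prod_(j < d'.+1) Nst j)%N with (\prod_(j < d'.+1) Nst j)%N.
  rewrite hLV hprod; split; first exact: half_le.
  split; first exact: up_le.
  move=> x hx j; rewrite !mxE.
  pose t := fun i => M j i * x i 0 - lo (M j i) (N i).
  have ht : forall i, 0 <= t i <= `|M j i| * ((N i)%:Z - 1).
    by move=> i; rewrite /t /lo; apply: term_bd; apply: hx.
  have e : \sum_i M j i * x i 0 + (1 - \sum_i lo (M j i) (N i)) = 1 + \sum_i t i.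
    by rewrite /t sumrB addrCA.
  rewrite e; apply/andP; split.
    by rewrite lerDl; apply: sumr_ge0 => i _; case/andP: (ht i).
  have hnz : ((nrm N (row j M))%:Z = \sum_i `|M j i| * (N i)%:Z).
    rewrite /nrm (big_morph Posz PoszD (erefl _)); apply: eq_bigr => i _.
    by rewrite mxE PoszM abszE.
  have h1 : (nrm N (row j M) <= Nst j)%N.
    by rewrite /Nst; case: ifP => // _; rewrite leq_pmulr.
  apply: le_trans (_ : (nrm N (row j M))%:Z <= (Nst j)%:Z); last by rewrite lez_nat.
  have hs1 : 1 <= \sum_i `|M j i|.
    have [kk [hk _]] := hNst0 j.
    rewrite (bigD1 (lift r kk)) //= MY; apply: ler_wpDr; first by apply: sumr_ge0.
    by move: hk; rewrite -normr_gt0.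
  have hs2 : \sum_i t i <= \sum_i `|M j i| * ((N i)%:Z - 1).
    by apply: ler_sum => i _; case/andP: (ht i).
  have hs3 : \sum_i `|M j i| * ((N i)%:Z - 1) = \sum_i `|M j i| * (N i)%:Z - \sum_i `|M j i|.
    by rewrite -sumrB; apply: eq_bigr => i _; rewrite mulrBr mulr1.
  rewrite hnz; apply: le_trans (lerD (lexx 1) hs2) _; rewrite hs3.
  move: hs1; clear; lia.
move=> x1 x2; split => [he | [kq hk]].
  have hu : forall j, \sum_i M j i * (x1 i 0 - x2 i 0) = 0.
    move=> j; have := congr1 (fun A : 'cV_d'.+1 => A j 0) (addIr v he); rewrite !mxE => e.
    rewrite (eq_bigr (fun i => M j i * x1 i 0 - M j i * x2 i 0)); last by move=> i _; rewrite mulrBr.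
    by rewrite sumrB e subrr.
  pose kq := ((x1 r 0 - x2 r 0)%:~R / (b r)%:~R : rat).
  exists kq.
  pose u' := fun i => ((x1 i 0 - x2 i 0)%:~R - kq * (b i)%:~R : rat).
  have ur : u' r = 0.
    by rewrite /u' /kq; field; rewrite intr_eq0.
  have hY0 : forall j, \sum_kk (Y j kk)%:~R * u' (lift r kk) = 0.
    move=> j.
    have : \sum_i (M j i)%:~R * u' i = 0.
      rewrite /u'; under eq_bigr => i _ do rewrite mulrBr [_ * (kq * _)]mulrCA.
      rewrite sumrB -mulr_sumr.
      have -> : \sum_i (M j i)%:~R * (x1 i 0 - x2 i 0)%:~R =
          ((\sum_i M j i * (x1 i 0 - x2 i 0))%:~R : rat).
        by rewrite intr_sum; apply: eq_bigr => i _; rewrite intrM.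
      have -> : \sum_i (M j i)%:~R * (b i)%:~R = ((\sum_i b i * M j i)%:~R : rat).
        by rewrite intr_sum; apply: eq_bigr => i _; rewrite intrM mulrC.
      by rewrite hu Mb mulr0 subr0.
    rewrite (bigD1_ord r) //= ur mulr0 add0r => e.
    by rewrite -[X in _ = X]e; apply: eq_bigr => kk _; rewrite MY.
  pose Yq := map_mx (intr : int -> rat) Y.
  have uYq : Yq \in unitmx by rewrite unitmxE det_map_mx unitfE intr_eq0.
  pose c : 'cV[rat]_d'.+1 := \col_kk u' (lift r kk).
  have Yc : Yq *m c = 0.
    apply/matrixP => j z; rewrite ord1 !mxE -[X in _ = X](hY0 j); apply: eq_bigr => kk _; rewrite !mxE.
    by [].
  have c0 : c = 0 by rewrite -(mulKmx uYq c) Yc mulmx0.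
  move=> i; apply/eqP; rewrite -subr_eq0; apply/eqP; change (u' i = 0).
  case: (unliftP r i) => [kk ->|->] //.
  by have := congr1 (fun A : 'cV_d'.+1 => A kk 0) c0; rewrite !mxE.
congr (_ + v); apply/matrixP => j z; rewrite ord1 !mxE; apply/eqP; rewrite -subr_eq0 -sumrB.
rewrite -(intr_eq0 rat) intr_sum.
under eq_bigr => i _ do rewrite -mulrBr intrM hk mulrCA.
rewrite -mulr_sumr.
have -> : \sum_i (M j i)%:~R * (b i)%:~R = ((\sum_i b i * M j i)%:~R : rat).
  by rewrite intr_sum; apply: eq_bigr => i _; rewrite intrM mulrC.
by rewrite Mb mulr0.
Qed.
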